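(* Let $X_1,X_2,\dots$ be iid random variables satisfying condition $(\mathrm{P})$ with constant $a>0$, and $S_k=X_1+\dots+X_k$. Then for each $\epsilon>0$ there is $B>0$ such that for all $k\ge3$ and $u>0$, $$P(S_k>u+a)\le\epsilon P(S_k>u)+\frac{P(S_{k-1}>u)}{P(X_1>B)}.$$
   Context: A random variable $Y$ satisfies condition $(\mathrm{P})$ with constant $a>0$ if $P(Y>u)>0$ for all $u>0$ and $\lim_{u\to\infty}P(Y>u+a)/P(Y>u)=0$. *)

(* Defs.v *)
From HB Require Import structures.
From mathcomp Require Import all_boot all_order all_algebra.
From mathcomp Require Import all_classical all_reals all_analysis.
Set Implicit Arguments. Unset Strict Implicit. Unset Printing Implicit Defensive.
Import Order.TTheory GRing.Theory Num.Theory.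
Import numFieldNormedType.Exports.
Local Open Scope classical_set_scope.
Local Open Scope ring_scope.

Definition tailP d (T : measurableType d) (R : realType) (P : probability T R)
  (Y : T -> R) (u : R) : R := fine (P [set w | u < Y w]).

Definition condition_P d (T : measurableType d) (R : realType)
  (P : probability T R) (Y : T -> R) (a : R) : Prop :=
  0 < a /\
  (forall u : R, 0 < u -> (0%E < P [set w | (u < Y w)%R])%E) /\
  ((fun u : R => tailP P Y (u + a) / tailP P Y u) @ +oo --> (0 : R)).

Definition mutually_independent d (T : measurableType d) (R : realType)
  (P : probability T R) (X : nat -> {RV P >-> R}) : Prop :=
  forall (J : seq nat) (B : nat -> set R),
    uniq J -> (forall i, measurable (B i)) ->
    P (\bigcap_(i in [set i | i \in J]) (X i @^-1` B i)) =
    (\prod_(i <- J) P (X i @^-1` B i))%E.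

Definition identically_distributed d (T : measurableType d) (R : realType)
  (P : probability T R) (X : nat -> {RV P >-> R}) : Prop :=
  forall n, distribution P (X n) = distribution P (X 0%N).

Definition iid d (T : measurableType d) (R : realType)
  (P : probability T R) (X : nat -> {RV P >-> R}) : Prop :=
  mutually_independent X /\ identically_distributed X.

(* partial sums: S k = X_1 + ... + X_k, where X_1 is X 0 (0-indexed) *)
Definition partial_sum d (T : measurableType d) (R : realType)
  (P : probability T R) (X : nat -> {RV P >-> R}) (k : nat) : T -> R :=
  fun w => \sum_(i < k) X i w.

(* Main.v *)
Require Import Defs.
From HB Require Import structures.
From mathcomp Require Import all_boot all_order all_algebra.
From mathcomp Require Import all_classical all_reals all_analysis.
From mathcomp Require Import lra ring.
Import Order.TTheory GRing.Theory Num.Theory.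
Local Open Scope classical_set_scope.
Local Open Scope ring_scope.
Set Implicit Arguments. Unset Strict Implicit. Unset Printing Implicit Defensive.


Section indep.
Context d (T : measurableType d) (R : realType) (P : probability T R).
Local Open Scope ereal_scope.

Lemma PfinE (A : set T) : measurable A -> P A = (fine (P A))%:E.
Proof. by move=> mA; rewrite fineK// fin_num_measure. Qed.

Definition indepP (F0 : set T) :=
  [set E | measurable E /\ P (E `&` F0) = P E * P F0].

Lemma indepP_lambda F0 : measurable F0 -> lambda_system setT (indepP F0).
Proof.
move=> mF0; split.
- by [].
- by split => //; rewrite setTI probability_setT mul1e.
- move=> A B BA [mA HA] [mB HB]; split; first exact: measurableD.
  have -> : (A `\` B) `&` F0 = (A `&` F0) `\` (B `&` F0).
    apply/seteqP; split => x /=; first by move=> [[? ?] ?]; split => // -[].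
    by move=> [[? ?] H]; split => //; split => // ?; apply: H.
  have fin (Z : set T) : measurable Z -> P Z < +oo.
    by move=> mZ; apply: (le_lt_trans (probability_le1 P mZ) (ltry _)).
  rewrite measureD; [|exact: measurableI|exact: measurableI|apply: fin; exact: measurableI].
  rewrite measureD //; last exact: fin.
  have -> : A `&` B = B by apply/seteqP; split => x /=; [case|move=> Bx; split => //; exact: BA].
  have -> : (A `&` F0) `&` (B `&` F0) = B `&` F0.
    by apply/seteqP; split => x /=; [move=> [[? ?] [? ?]] | move=> [? ?]; split; split => //; apply: BA].
  change (P (A `&` F0) - P (B `&` F0) = (P A - P B) * P F0).
  rewrite HA HB (PfinE mA) (PfinE mB) (PfinE mF0).
  have key (a b f : R) : a%:E * f%:E - b%:E * f%:E = (a%:E - b%:E) * f%:E.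
    by rewrite -!EFinM -EFinB mulrBl.
  exact: key.
- move=> F ndF HF; split.
    by apply: bigcup_measurable => i _; case: (HF i).
  have mF i : measurable (F i) by case: (HF i).
  have c1 := nondecreasing_cvg_mu (mu := P) mF (bigcup_measurable (fun i _ => mF i)) ndF.
  have mFI i : measurable (F i `&` F0) by apply: measurableI.
  have ndFI : nondecreasing_seq (fun i => F i `&` F0).
    by move=> m n mn; apply/subsetPset; apply: setSI; apply/subsetPset/ndF.
  have c2 := nondecreasing_cvg_mu (mu := P) mFI (bigcup_measurable (fun i _ => mFI i)) ndFI.
  have e2 : (P \o (fun i => F i `&` F0)) = (fun i => P (F i) * P F0).
    by apply/funext => i /=; case: (HF i).
  rewrite e2 -setI_bigcupl in c2.
  have c3 : (fun i => P (F i) * P F0) @ \oo --> P (\bigcup_n F n) * P F0.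
    apply: cvgeM; [apply: mule_def_fin; apply: fin_num_measure => //; exact: bigcup_measurable
                  |exact: c1|exact: cvg_cst].
  exact: (cvg_unique _ c2 c3).
Qed.


Variable X : nat -> {RV P >-> R}.

Definition blk (s : seq nat) : set (set T) :=
  [set E | exists B : nat -> set R, (forall i, measurable (B i)) /\
     E = \bigcap_(i in [set i | i \in s]) (X i @^-1` B i)].

Lemma blk_setI s : setI_closed (blk s).
Proof.
move=> E F [B [mB ->]] [B' [mB' ->]].
exists (fun i => B i `&` B' i); split; first by move=> i; apply: measurableI.
apply/seteqP; split => x /=.
  by move=> [H1 H2] i si; split; [exact: H1|exact: H2].
by move=> H; split => i si; have [] := H i si.
Qed.

Lemma blk_meas s E : blk s E -> measurable E.
Proof.
move=> [B [mB ->]]; apply: bigcap_measurableType => i _.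
exact: measurable_funPTI.
Qed.

Lemma blkT s : blk s setT.
Proof.
exists (fun _ => setT); split => //.
by apply/seteqP; split => x //= _ i _.
Qed.

Lemma sblk_meas s E : <<s blk s >> E -> measurable E.
Proof.
move=> sE; apply: (smallest_sub _ _ sE) => //.
- split; [exact: measurable0 | by move=> A mA; rewrite setTD; apply: measurableC
   | by move=> F mF; apply: bigcup_measurable].
- by move=> A; apply: blk_meas.
Qed.

Lemma blk_indep s1 s2 E F : mutually_independent X -> uniq (s1 ++ s2) ->
  blk s1 E -> blk s2 F -> P (E `&` F) = P E * P F.
Proof.
move=> ind u [B [mB ->]] [B' [mB' ->]].
move: (u); rewrite cat_uniq => /and3P[u1 /hasPn h12 u2].
pose B'' i := if i \in s1 then B i else B' i.
have mB'' i : measurable (B'' i) by rewrite /B''; case: ifP.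
have -> : \bigcap_(i in [set i | i \in s1]) (X i @^-1` B i) `&`
          \bigcap_(i in [set i | i \in s2]) (X i @^-1` B' i) =
          \bigcap_(i in [set i | i \in s1 ++ s2]) (X i @^-1` B'' i).
  apply/seteqP; split => x /=.
    move=> [H1 H2] i /= /[!mem_cat] /orP[si|si]; rewrite /B''.
      by rewrite si; exact: H1.
    by have /negbTE -> := h12 _ si; exact: H2.
  move=> H; split => i /= si; have := H i; rewrite /= mem_cat si ?orbT /B''.
    by rewrite si; apply.
  by have /negbTE -> := h12 _ si; apply.
rewrite ind // big_cat /= ind // ind //.
congr (_ * _); apply: eq_big_seq => i si; rewrite /B''.
  by rewrite si.
by have /negbTE -> := h12 _ si.
Qed.

Lemma sblk_indep s1 s2 E F : mutually_independent X -> uniq (s1 ++ s2) ->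
  <<s blk s1 >> E -> <<s blk s2 >> F -> P (E `&` F) = P E * P F.
Proof.
move=> ind u sE sF.
have step1 F0 : blk s2 F0 -> <<s blk s1 >> `<=` indepP F0.
  move=> bF0.
  have GH : blk s1 `<=` indepP F0.
    move=> E0 bE0; split; first exact: blk_meas bE0.
    exact: (blk_indep ind u bE0 bF0).
  exact: (lambda_system_subset (@blk_setI s1) (indepP_lambda (blk_meas bF0)) GH (fun _ _ _ _ => I)).
have mE := sblk_meas sE.
have GH : blk s2 `<=` indepP E.
  move=> F0 bF0; split; first exact: blk_meas bF0.
  have [_ h] := step1 _ bF0 _ sE.
  by rewrite setIC h muleC.
have [_ h] := lambda_system_subset (@blk_setI s2) (indepP_lambda mE) GH (fun _ _ _ _ => I) sF.
by rewrite setIC h muleC.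
Qed.


Lemma Xi_meas s i : i \in s ->
  measurable_fun (setT : set (g_sigma_algebraType (blk s))) (X i : T -> R).
Proof.
move=> si _ Y mY; apply: sub_sigma_algebra.
exists (fun j => if j == i then Y else setT); split.
  by move=> j; case: ifP.
apply/seteqP; split => x /=.
  move=> [_ Yx] j _; case: ifPn => [/eqP -> //|_]; by [].
by move=> H; split => //; have := H i si; rewrite eqxx.
Qed.

Lemma sblk_pre s (f : g_sigma_algebraType (blk s) -> R) : measurable_fun setT f ->
  forall A, measurable A -> <<s blk s >> (f @^-1` A).
Proof.
by move=> mf A mA; have := mf measurableT A mA; rewrite setTI.
Qed.

Lemma psum_sblk m A : measurable A ->
  <<s blk (iota 0 m) >> (partial_sum X m @^-1` A).
Proof.
move=> mA.
apply: (@sblk_pre (iota 0 m) (partial_sum X m)) => //.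
rewrite /partial_sum.
apply: measurable_sum => i.
by apply: Xi_meas; rewrite mem_iota /= add0n ltn_ord.
Qed.


Definition indep2 (Y Z : T -> R) := forall A C, measurable A -> measurable C ->
  P (Y @^-1` A `&` Z @^-1` C) = P (Y @^-1` A) * P (Z @^-1` C).

Lemma indep2_of s1 s2 (Y Z : T -> R) : mutually_independent X -> uniq (s1 ++ s2) ->
  (forall A, measurable A -> <<s blk s1 >> (Y @^-1` A)) ->
  (forall A, measurable A -> <<s blk s2 >> (Z @^-1` A)) -> indep2 Y Z.
Proof.
move=> ind u hY hZ A C mA mC; apply: (sblk_indep ind u); [exact: hY|exact: hZ].
Qed.

Lemma indep_W_V m : mutually_independent X ->
  indep2 (partial_sum X m) (fun w => (X m w + X m.+1 w)%R).
Proof.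
move=> ind; apply: (@indep2_of (iota 0 m) [:: m; m.+1]) => //.
- by rewrite (_ : [:: m; m.+1] = iota m 2)// -iotaD iota_uniq.
- exact: psum_sblk.
- move=> A mA.
  apply: (@sblk_pre [:: m; m.+1] (fun w => (X m w + X m.+1 w)%R)) => //.
  by apply: measurable_realfun.measurable_funD; apply: Xi_meas; rewrite !inE eqxx ?orbT.
Qed.

Lemma indep_W_Xm m : mutually_independent X ->
  indep2 (partial_sum X m) (X m).
Proof.
move=> ind; apply: (@indep2_of (iota 0 m) [:: m]) => //.
- by rewrite (_ : [:: m] = iota m 1)// -iotaD iota_uniq.
- exact: psum_sblk.
- move=> A mA.
  apply: (@sblk_pre [:: m] (X m)) => //.
  by apply: Xi_meas; rewrite !inE eqxx.
Qed.

Lemma indep_Xi_Xj i j : mutually_independent X -> i != j ->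
  indep2 (X i) (X j).
Proof.
move=> ind ij; apply: (@indep2_of [:: i] [:: j]) => //.
- by rewrite /= inE ij.
- move=> A mA; apply: (@sblk_pre [:: i] (X i)) => //.
  by apply: Xi_meas; rewrite !inE eqxx.
- move=> A mA; apply: (@sblk_pre [:: j] (X j)) => //.
  by apply: Xi_meas; rewrite !inE eqxx.
Qed.

End indep.


Section anal.
Context d (T : measurableType d) (R : realType) (P : probability T R).
Local Open Scope ereal_scope.

Lemma preimZ (Z : T -> R) (v : R) : [set w | (v < Z w)%R] = Z @^-1` `]v, +oo[%classic.
Proof. by apply/seteqP; split => w /=; rewrite in_itv /= andbT. Qed.

Lemma measZ (Z : T -> R) (v : R) : measurable_fun setT Z ->
  measurable [set w | (v < Z w)%R].
Proof.
move=> mZ; rewrite preimZ -[X in measurable X]setTI.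
by apply: mZ => //; exact: measurable_itv.
Qed.

Lemma measpre (Z : T -> R) (v : R) : measurable_fun setT Z ->
  measurable (Z @^-1` `]v, +oo[%classic).
Proof. by move=> mZ; rewrite -preimZ; exact: measZ. Qed.

Lemma measYle (Y : T -> R) (v : R) : measurable_fun setT Y ->
  measurable [set w | (Y w <= v)%R].
Proof.
move=> mY.
have -> : [set w | (Y w <= v)%R] = Y @^-1` `]-oo, v]%classic.
  by apply/seteqP; split => w /=; rewrite in_itv.
rewrite -[X in measurable X]setTI.
by apply: mY => //; exact: measurable_itv.
Qed.

Lemma lePr (A B : set T) : measurable A -> measurable B -> A `<=` B -> P A <= P B.
Proof. by move=> mA mB AB; apply: le_measure => //; rewrite inE. Qed.

Lemma lim_above (A : set T) (f : T -> R) (t : R) (r : \bar R) :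
  measurable A -> measurable_fun setT f ->
  (forall t', (t < t')%R -> P (A `&` [set w | (t' < f w)%R]) <= r) ->
  P (A `&` [set w | (t < f w)%R]) <= r.
Proof.
move=> mA mf H.
pose F n := A `&` [set w | (t + n.+1%:R^-1 < f w)%R].
have mF n : measurable (F n).
  by apply: measurableI => //; exact: measZ.
have ndF : nondecreasing_seq F.
  move=> m n mn; apply/subsetPset => w [Aw /= h]; split => //=.
  apply: le_lt_trans h; rewrite lerD2l lef_pV2 ?posrE// ler_nat ltnS //.
have eU : \bigcup_n F n = A `&` [set w | (t < f w)%R].
  apply/seteqP; split => w.
    move=> [n _ [Aw /= h]]; split => //=; apply: lt_trans h.
    by rewrite ltrDl invr_gt0.
  move=> [Aw /= h]; have [k hk] := ltr_add_invr h.
  by exists k => //; split.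
have mU : measurable (\bigcup_n F n) by apply: bigcup_measurable => n _.
have c := nondecreasing_cvg_mu (mu := P) mF mU ndF.
rewrite -eU; apply: (cvge_to_le c); apply: nearW => n /=.
by apply: H; rewrite ltrDl invr_gt0.
Qed.


Lemma disc (Y Z : T -> R) (a e B u u' : R) :
  measurable_fun setT Y -> measurable_fun setT Z -> indep2 P Y Z ->
  (0 <= e)%R -> (u < u')%R ->
  (forall v, (B <= v)%R -> P [set w | (v + a < Z w)%R] <= e%:E * P [set w | (v < Z w)%R]) ->
  P ([set w | (Y w <= u - B)%R] `&` [set w | (u' + a < Y w + Z w)%R]) <=
    e%:E * P [set w | (u < Y w + Z w)%R].
Proof.
move=> mY mZ ind e0 uu' hZ.
have dp : (0 < u' - u)%R by rewrite subr_gt0.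
pose c (j : nat) : R := (j%:R * (u' - u))%R.
have cS j : c j.+1 = (c j + (u' - u))%R by rewrite /c -addn1 natrD mulrDl mul1r.
pose I j := Y @^-1` `](u - B - c j - (u' - u))%R, (u - B - c j)%R]%classic.
have mI j : measurable (I j).
  by rewrite /I -[X in measurable X]setTI; apply: mY => //; exact: measurable_itv.
have mYZ (t : R) : measurable [set w | (t < Y w + Z w)%R].
  apply: measZ; exact: measurable_realfun.measurable_funD.
pose S1 := [set w | (u' + a < Y w + Z w)%R].
pose S2 := [set w | (u < Y w + Z w)%R].
have mL : measurable ([set w | (Y w <= u - B)%R] `&` S1).
  by apply: measurableI; [exact: measYle|exact: mYZ].
have cov : [set w | (Y w <= u - B)%R] `&` S1 `<=` \bigcup_j (I j `&` S1).
  move=> w [/= hY hS].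
  have x0 : (0 <= (u - B - Y w) / (u' - u))%R.
    by apply: divr_ge0; [rewrite subr_ge0|exact: ltW].
  have /andP[h1 h2] := Num.Theory.truncn_itv x0.
  move: (Num.truncn _) h1 h2 => j h1 h2.
  exists j => //; split => //; rewrite /I /= in_itv /= /c.
  rewrite ler_pdivlMr // in h1; rewrite ltr_pdivrMr // in h2.
  move: h2; rewrite -addn1 natrD mulrDl mul1r => h2.
  move: (j%:R * (u' - u))%R h1 h2 => q h1 h2.
  apply/andP; split; lra.
have le1 := measure_sigma_subadditive P (fun j => measurableI _ _ (mI j) (mYZ _)) mL cov.
apply: (le_trans le1).
have le2 j : P (I j `&` S1) <= e%:E * P (I j `&` S2).
  pose wj := (B + c j + (u' - u))%R.
  have sub1 : I j `&` S1 `<=` I j `&` Z @^-1` `](wj + a)%R, +oo[%classic.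
    move=> w [hI hS]; split => //; move: hI hS; rewrite /I /S1 /= !in_itv /= andbT.
    move=> /andP[h1 h2] h3; rewrite /wj; move: (c j) h1 h2 => q h1 h2; lra.
  have sub2 : I j `&` Z @^-1` `]wj, +oo[%classic `<=` I j `&` S2.
    move=> w [hI hS]; split => //; move: hI hS; rewrite /I /S2 /= !in_itv /= andbT.
    move=> /andP[h1 h2] h3; rewrite /wj in h3; move: (c j) h1 h2 h3 => q h1 h2 h3; lra.
  have mZi (t : R) : measurable (Z @^-1` `]t, +oo[%classic).
    by rewrite -preimZ; exact: measZ.
  have mS1 : measurable S1 by exact: mYZ.
  have mS2 : measurable S2 by exact: mYZ.
  apply: (le_trans (lePr (measurableI _ _ (mI j) mS1) (measurableI _ _ (mI j) (mZi _)) sub1)).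
  rewrite /I ind; last 2 first; [exact: measurable_itv|exact: measurable_itv|].
  have hw : (B <= wj)%R.
    rewrite /wj /c -addrA lerDl; apply: addr_ge0; last exact: ltW.
    by apply: mulr_ge0 => //; exact: ltW.
  have := hZ _ hw; rewrite !preimZ => h.
  apply: le_trans; first (apply: lee_wpmul2l; last exact: h); first exact: measure_ge0.
  rewrite muleCA; apply: lee_wpmul2l; first by rewrite lee_fin.
  rewrite -ind; last 2 first; [exact: measurable_itv|exact: measurable_itv|].
  exact: (lePr (measurableI _ _ (mI j) (mZi _)) (measurableI _ _ (mI j) mS2) sub2).
apply: le_trans.
  by apply: (@lee_nneseries _ _ (fun j => e%:E * P (I j `&` S2))) => [n _ _|n _];
    [exact: measure_ge0|exact: le2].
rewrite nneseriesZl; last by move=> n _; exact: measure_ge0.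
apply: lee_wpmul2l; first by rewrite lee_fin.
have tI : trivIset setT (fun j => I j `&` S2).
  move=> i j _ _ [w [[hi _] [hj _]]]; move: hi hj; rewrite /I /= !in_itv /=.
  move=> /andP[hi1 hi2] /andP[hj1 hj2].
  have key (m n : nat) : (m < n)%N -> (c m + (u' - u) <= c n)%R.
    move=> mn; rewrite -cS /c ler_wpM2r ?ler_nat //; exact: ltW.
  case: (ltngtP i j) => // ij; exfalso.
    have := key _ _ ij; move: (c i) (c j) hi1 hi2 hj1 hj2 => p q; lra.
  have := key _ _ ij; move: (c i) (c j) hi1 hi2 hj1 hj2 => p q; lra.
have mC j : measurable (I j `&` S2) by apply: measurableI; [exact: mI|exact: mYZ].
have mU : measurable (\bigcup_j (I j `&` S2)) by apply: bigcup_measurable => j _.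
rewrite -(measure_semi_bigcup P) //.
apply: (lePr mU (mYZ u)).
by move=> w [j _ []].
Qed.


Lemma disc2 (Y Z : T -> R) (a e B u : R) :
  measurable_fun setT Y -> measurable_fun setT Z -> indep2 P Y Z -> (0 <= e)%R ->
  (forall v, (B <= v)%R -> P [set w | (v + a < Z w)%R] <= e%:E * P [set w | (v < Z w)%R]) ->
  P ([set w | (Y w <= u - B)%R] `&` [set w | (u + a < Y w + Z w)%R]) <=
    e%:E * P [set w | (u < Y w + Z w)%R].
Proof.
move=> mY mZ ind e0 hZ.
apply: (lim_above (f := fun w => Y w + Z w)%R).
- exact: measYle.
- exact: measurable_realfun.measurable_funD.
move=> t' ht'.
have -> : t' = ((t' - a) + a)%R by rewrite subrK.
apply: (disc mY mZ ind e0 _ hZ).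
by rewrite ltrBrDr.
Qed.

Lemma fin3 (e x : R) : (e%:E * x%:E + e%:E * x%:E + e%:E * x%:E = (3 * e)%:E * x%:E).
Proof. by rewrite -!EFinM -!EFinD; congr (_%:E); ring. Qed.

Lemma pair_ratio (Y Z : T -> R) (a e B0 B : R) :
  measurable_fun setT Y -> measurable_fun setT Z -> indep2 P Y Z -> indep2 P Z Y ->
  (0 <= e)%R ->
  (forall v, (B0 <= v)%R -> P [set w | (v + a < Y w)%R] <= e%:E * P [set w | (v < Y w)%R]) ->
  (forall v, (B0 <= v)%R -> P [set w | (v + a < Z w)%R] <= e%:E * P [set w | (v < Z w)%R]) ->
  (forall v, (B <= v)%R -> P [set w | (v - B0 < Z w)%R] <= e%:E * P [set w | (B0 < Z w)%R]) ->
  forall v, (B <= v)%R ->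
  P [set w | (v + a < Y w + Z w)%R] <= (3 * e)%:E * P [set w | (v < Y w + Z w)%R].
Proof.
move=> mY mZ iYZ iZY e0 hY hZ hs v hv.
have mYZ (t : R) : measurable [set w | (t < Y w + Z w)%R].
  apply: measZ; exact: measurable_realfun.measurable_funD.
pose R1 := [set w | (Y w <= v - B0)%R] `&` [set w | (v + a < Y w + Z w)%R].
pose R2 := [set w | (Z w <= v - B0)%R] `&` [set w | (v + a < Z w + Y w)%R].
pose R3 := [set w | (v - B0 < Y w)%R] `&` [set w | (v - B0 < Z w)%R].
have mR1 : measurable R1 by apply: measurableI; [exact: measYle|exact: mYZ].
have mR2 : measurable R2.
  apply: measurableI; first exact: measYle.
  by apply: measZ; exact: measurable_realfun.measurable_funD.
have mR3 : measurable R3 by apply: measurableI; exact: measZ.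
have cov : [set w | (v + a < Y w + Z w)%R] `<=` R1 `|` R2 `|` R3.
  move=> w /= h.
  case: (leP (Y w) (v - B0)%R) => h1; first by left; left; split.
  case: (leP (Z w) (v - B0)%R) => h2; first by left; right; split => //=; rewrite [(Z w + _)%R]addrC.
  by right; split.
have le0 : P [set w | (v + a < Y w + Z w)%R] <= P R1 + P R2 + P R3.
  apply: (le_trans (lePr (mYZ _) _ cov)).
    by apply: measurableU => //; exact: measurableU.
  apply: (le_trans (measureU2 _ _ _)) => //; first exact: measurableU.
  by rewrite leeD2r // measureU2.
have le1 : P R1 <= e%:E * P [set w | (v < Y w + Z w)%R] by exact: disc2.
have le2 : P R2 <= e%:E * P [set w | (v < Y w + Z w)%R].
  have -> : [set w | (v < Y w + Z w)%R] = [set w | (v < Z w + Y w)%R].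
    by apply/seteqP; split => w /=; rewrite addrC.
  exact: disc2.
have le3 : P R3 <= e%:E * P [set w | (v < Y w + Z w)%R].
  rewrite /R3 !preimZ iYZ; [|exact: measurable_itv|exact: measurable_itv].
  apply: (le_trans (lee_wpmul2l (measure_ge0 P _) _)).
    by rewrite -preimZ; apply: hs; lra.
  rewrite muleCA; apply: lee_wpmul2l; first by rewrite lee_fin.
  rewrite preimZ -iYZ; [|exact: measurable_itv|exact: measurable_itv].
  apply: lePr; [apply: measurableI; exact: measpre
               |exact: (measpre _ (measurable_realfun.measurable_funD mY mZ))|].
  move=> w [/=]; rewrite !in_itv /= !andbT => h1 h2; lra.
apply: (le_trans le0).
apply: le_trans; first by apply: leeD; first apply: leeD; [exact: le1|exact: le2|exact: le3].
by rewrite (PfinE P (mYZ v)) fin3.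
Qed.

End anal.


Section mainsec.
Context d (T : measurableType d) (R : realType) (P : probability T R).
Variable X : nat -> {RV P >-> R}.

Lemma idtail n t : identically_distributed X ->
  P [set w | t < X n w] = P [set w | t < X 0%N w].
Proof.
move=> ids; rewrite !preimZ.
by have := congr1 (fun mu : set R -> \bar R => mu `]t, +oo[%classic) (ids n).
Qed.

Lemma extract_ratio (a e : R) : 0 < e -> condition_P P (X 0%N) a ->
  exists B0 : R, 0 < B0 /\ forall v, B0 <= v ->
    (P [set w | (v + a < X 0%N w)%R] <= e%:E * P [set w | (v < X 0%N w)%R])%E.
Proof.
move=> e0 [a0 [pos lim]].
move/cvgrPdist_lt: lim => /(_ e e0) [M [_ HM]].
have hM1 : M <= Num.max M 0 by rewrite le_max lexx.
have hM2 : 0 <= Num.max M 0 by rewrite le_max lexx orbT.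
exists (Num.max M 0 + 1); split.
  move: (Num.max M 0) hM2 => q; lra.
move=> v hv.
have vM : M < v by move: (Num.max M 0) hM1 hv => q; lra.
have v0 : 0 < v by move: (Num.max M 0) hM2 hv => q; lra.
have := HM _ vM; rewrite sub0r normrN /tailP.
have mv t : d.-measurable [set w | t < X 0%N w] by apply: measZ; exact: measurable_funP.
have gp : 0 < fine (P [set w | v < X 0%N w]).
  apply: fine_gt0; rewrite pos //=.
  exact: (le_lt_trans (probability_le1 P (mv v)) (ltry _)).
move=> h.
have h2 : fine (P [set w | v + a < X 0%N w]) <= e * fine (P [set w | v < X 0%N w]).
  rewrite -ler_pdivrMr //; apply: ltW; apply: le_lt_trans h; exact: ler_norm.
rewrite (PfinE P (mv (v + a))) (PfinE P (mv v)) -EFinM lee_fin.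
exact: h2.
Qed.

Lemma extract_small (e B0 : R) : 0 < e ->
  (0%E < P [set w | (B0 < X 0%N w)%R])%E ->
  exists B1 : R, 0 < B1 /\ forall v, B1 <= v ->
    (P [set w | (v < X 0%N w)%R] <= e%:E * P [set w | (B0 < X 0%N w)%R])%E.
Proof.
move=> e0 gpos.
have mv t : d.-measurable [set w | t < X 0%N w] by apply: measZ; exact: measurable_funP.
have g0 : 0 < fine (P [set w | (B0 < X 0%N w)%R]).
  apply: fine_gt0; rewrite gpos /=.
  exact: (le_lt_trans (probability_le1 P (mv B0)) (ltry _)).
have c := cvg_ccdfy0 (X 0%N).
move/fine_cvgP: c => [_ c'].
move/cvgrPdist_lt: c' => /(_ (e * fine (P [set w | (B0 < X 0%N w)%R])) (mulr_gt0 e0 g0)) [M [_ HM]].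
have hM1 : M <= Num.max M 0 by rewrite le_max lexx.
have hM2 : 0 <= Num.max M 0 by rewrite le_max lexx orbT.
exists (Num.max M 0 + 1); split.
  move: (Num.max M 0) hM2 => q; lra.
move=> v hv.
have vM : M < v by move: (Num.max M 0) hM1 hv => q; lra.
have := HM _ vM; rewrite sub0r normrN /=.
have -> : ccdf (X 0%N) v = P [set w | (v < X 0%N w)%R] by rewrite preimZ.
move=> h.
rewrite (PfinE P (mv v)) (PfinE P (mv B0)) -EFinM lee_fin.
apply: ltW; apply: le_lt_trans h; exact: ler_norm.
Qed.

End mainsec.

Unset Implicit Arguments. Set Strict Implicit.

Theorem lemma10 (d : measure_display) (T : measurableType d) (R : realType)
  (P : probability T R) (X : nat -> {RV P >-> R}) (a : R) :
  iid X -> condition_P P (X 0%N) a ->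
  forall eps : R, 0 < eps ->
  exists B : R, 0 < B /\
    forall (k : nat) (u : R), (3 <= k)%N -> 0 < u ->
      tailP P (partial_sum X k) (u + a) <=
        eps * tailP P (partial_sum X k) u
        + tailP P (partial_sum X k.-1) u / tailP P (X 0%N) B.
Proof.
move=> [ind ids] cP eps eps0.
have [a0 [pos _]] := cP.
pose e := eps / 3.
have e0 : 0 < e by apply: divr_gt0.
have e3 : 3 * e = eps by rewrite /e; field.
have [B0 [B00 hB0]] := extract_ratio e0 cP.
have gB0 := pos B0 B00.
have [B1 [B10 hB1]] := extract_small e0 gB0.
exists (B0 + B1); split; first lra.
move=> k u k3 u0.
case: k k3 => [|[|m]] // _.
rewrite /=.
set B := B0 + B1.
have mX i : measurable_fun setT (X i) by exact: measurable_funP.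
pose W := partial_sum X m.
pose V := fun w => X m w + X m.+1 w.
have psumS n : partial_sum X n.+1 = fun w => partial_sum X n w + X n w.
  by apply/funext => w; rewrite /partial_sum big_ord_recr.
have eK : partial_sum X m.+2 = fun w => W w + V w.
  by rewrite psumS psumS; apply/funext => w; rewrite /V addrA.
have eK1 : partial_sum X m.+1 = fun w => W w + X m w by rewrite psumS.
have mW : measurable_fun setT W.
  by rewrite /W /partial_sum; apply: measurable_sum => i; exact: mX.
have mV : measurable_fun setT V by exact: measurable_realfun.measurable_funD.
have hr i v : B0 <= v ->
    (P [set w | (v + a < X i w)%R] <= e%:E * P [set w | (v < X i w)%R])%E.
  by move=> hv; rewrite !(idtail _ _ ids); exact: hB0.
have hs v : B <= v ->
    (P [set w | (v - B0 < X m.+1 w)%R] <= e%:E * P [set w | (B0 < X m.+1 w)%R])%E.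
  move=> hv; rewrite !(idtail _ _ ids); apply: hB1; rewrite /B in hv; lra.
have pr := pair_ratio (mX m) (mX m.+1) (indep_Xi_Xj ind (negbT (ltn_eqF (ltnSn m))))
  (indep_Xi_Xj ind (negbT (gtn_eqF (ltnSn m)))) (ltW e0) (hr m) (hr m.+1) hs.
rewrite e3 in pr.
have h1 := disc2 u mW mV (indep_W_V m ind) (ltW eps0) pr.
have mS (f : T -> R) t : measurable_fun setT f -> d.-measurable [set w | (t < f w)%R].
  by move=> mf; exact: measZ.
have mWV : measurable_fun setT (fun w => W w + V w) by exact: measurable_realfun.measurable_funD.
have mWX : measurable_fun setT (fun w => W w + X m w) by exact: measurable_realfun.measurable_funD.
pose L := [set w | (W w <= u - B)%R] `&` [set w | (u + a < W w + V w)%R].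
pose Q := [set w | (u - B < W w)%R].
have mL : d.-measurable L by apply: measurableI; [exact: measYle|exact: mS].
have mQ : d.-measurable Q by exact: mS.
have cov : [set w | (u + a < W w + V w)%R] `<=` L `|` Q.
  move=> w /= h; case: (leP (W w) (u - B)) => hw; [by left; split|by right].
have hT : (P [set w | (u + a < W w + V w)%R] <= P L + P Q)%E.
  apply: (le_trans (lePr P (mS _ _ mWV) (measurableU _ _ mL mQ) cov)).
  exact: measureU2.
have hQ : (P Q * P [set w | (B < X m w)%R] <= P [set w | (u < W w + X m w)%R])%E.
  rewrite /Q !preimZ -(indep_W_Xm m ind); [|exact: measurable_itv|exact: measurable_itv].
  apply: lePr; [apply: measurableI; exact: measpre|exact: measpre|].
  move=> w [/=]; rewrite !in_itv /= !andbT => hw1 hw2; rewrite -/W in hw1; lra.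
have gpos : 0 < fine (P [set w | (B < X m w)%R]).
  rewrite (idtail _ _ ids); apply: fine_gt0; rewrite pos /=; last by rewrite /B; lra.
  exact: (le_lt_trans (probability_le1 P (mS _ _ (mX 0%N))) (ltry _)).
rewrite eK eK1 /tailP -(idtail m B ids).
rewrite (PfinE P (mS _ _ mWV)) (PfinE P mL) (PfinE P mQ) -EFinD lee_fin in hT.
rewrite (PfinE P mQ) (PfinE P (mS _ _ (mX m))) (PfinE P (mS _ _ mWX)) -EFinM lee_fin in hQ.
rewrite (PfinE P mL) (PfinE P (mS _ _ mWV)) -EFinM lee_fin in h1.
apply: (le_trans hT); apply: lerD => //.
by rewrite ler_pdivlMr.
Qed.
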